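(* Let $G$ be a finite group and let $p,q$ be distinct primes dividing $|G|$. Let $m,n$ be positive integers and suppose that $|G| = p^i q^n$ for some integer $i$ with $1 \le i \le m$. If $p \nmid q^n - 1$ and $q \nmid p^{\gcd([m],\, q-1)} - 1$, then $G$ has an abelian subgroup of order $pq$.
   Context: For a positive integer $m$, $[m]$ denotes the least common multiple of $1,2,\dots,m$, i.e. $[m] = \operatorname{lcm}(1,2,\dots,m)$. $\gcd(a,b)$ denotes the greatest common divisor. *)

(* Defs.v *)
From mathcomp Require Import all_boot all_order all_fingroup.
Set Implicit Arguments. Unset Strict Implicit. Unset Printing Implicit Defensive.

(* [m] = lcm(1, 2, ..., m), with [0] = 1 (empty lcm). *)
Definition lcm_upto (m : nat) : nat := \big[lcmn/1]_(1 <= k < m.+1) k.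

(* Main.v *)
Require Import Defs.
From mathcomp Require Import all_boot all_order all_fingroup.
From mathcomp Require Import all_solvable.
Set Implicit Arguments. Unset Strict Implicit. Unset Printing Implicit Defensive.

Lemma dvd_lcm_upto m j : 0 < j <= m -> j %| lcm_upto m.
Proof.
elim: m => [|m IH] /andP[j0 jm]; first by rewrite leqNgt j0 in jm.
rewrite /lcm_upto big_nat_recr //= -/(lcm_upto m).
have [->|ne] := eqVneq j m.+1; first exact: dvdn_lcmr.
apply: dvdn_trans (dvdn_lcml _ _); apply: IH.
by rewrite j0 -ltnS ltn_neqAle ne jm.
Qed.

Lemma exp_gcd_mod x a b q : 0 < a ->
  x ^ a = 1 %[mod q] -> x ^ b = 1 %[mod q] -> x ^ gcdn a b = 1 %[mod q].
Proof.
move=> a0 Ha Hb; case: (egcdnP b a0) => km kn E _.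
have h1 : x ^ (km * a) = 1 %[mod q] by rewrite mulnC expnM -modnXm Ha modnXm exp1n.
have h2 : x ^ (kn * b) = 1 %[mod q] by rewrite mulnC expnM -modnXm Hb modnXm exp1n.
rewrite -[x ^ gcdn a b]mul1n -modnMml -h2 modnMml -expnD -E h1 //.
Qed.

Lemma nt_key p q m j : prime p -> prime q -> p != q -> 0 < j <= m ->
  ~~ (q %| p ^ (gcdn (lcm_upto m) (q - 1)) - 1) -> ~~ (q %| p ^ j - 1).
Proof.
move=> pp qp pq /andP[j0 jm] H; apply: contra H => Hj.
have p0 : 0 < p by exact: prime_gt0.
rewrite -eqn_mod_dvd ?expn_gt0 ?p0 //; rewrite -eqn_mod_dvd ?expn_gt0 ?p0 // in Hj.
have Hf : p ^ (q - 1) = 1 %[mod q].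
  rewrite subn1 -totient_prime // Euler_exp_totient //.
  by rewrite coprime_sym prime_coprime // dvdn_prime2 // eq_sym.
have Hg := exp_gcd_mod j0 (eqP Hj) Hf.
have /dvdnP[k ->] : gcdn j (q - 1) %| gcdn (lcm_upto m) (q - 1).
  by rewrite dvdn_gcd dvdn_gcdr andbT (dvdn_trans (dvdn_gcdl _ _)) // dvd_lcm_upto // j0.
by apply/eqP; rewrite mulnC expnM -modnXm Hg modnXm exp1n.
Qed.

Theorem theorem2p4 (gT : finGroupType) (G : {group gT}) (p q m n i : nat) :
  prime p -> prime q -> p != q -> p %| #|G| -> q %| #|G| ->
  0 < m -> 0 < n -> 1 <= i <= m ->
  #|G| = p ^ i * q ^ n ->
  ~~ (p %| q ^ n - 1) ->
  ~~ (q %| p ^ (gcdn (lcm_upto m) (q - 1)) - 1) ->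
  exists H : {group gT}, [/\ H \subset G, abelian H & #|H| = p * q].
Proof.
move=> pp qp pq pG qG m0 n0 /andP[i1 im] oG Hpn Hq.
have p0 : 0 < p by exact: prime_gt0.
have q0 : 0 < q by exact: prime_gt0.
have cqp : coprime q p by rewrite prime_coprime // dvdn_prime2 // eq_sym.
have nq1 : #|Syl q G| == 1.
  have cn : coprime #|Syl q G| q by rewrite -coprime_modl card_Syl_mod // coprime1n.
  have : #|Syl q G| %| p ^ i.
    by rewrite -(Gauss_dvdr _ (coprimeXr n cn)) mulnC -oG card_Syl_dvd.
  case/dvdn_pfactor => // j ji Ej; rewrite Ej.
  case: j ji Ej => [//|j] ji Ej.
  have E := card_Syl_mod G qp.
  have : q %| p ^ j.+1 - 1.
    rewrite -eqn_mod_dvd ?expn_gt0 ?p0 //; apply/eqP.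
    by rewrite -Ej E modn_small // prime_gt1.
  by move/negP: (nt_key pp qp pq (j := j.+1) (m := m) (leq_trans ji im) Hq).
have [Q sylQ nQG] := normal_sylowP _ _ nq1.
have oQ : #|Q| = q ^ n.
  rewrite (card_Hall sylQ) p_part oG lognM ?expn_gt0 ?p0 ?q0 // !lognX.
  rewrite (logn_prime _ qp) (logn_prime _ pp) eqxx eq_sym (negbTE pq) muln0 muln1 //.
have [x Gx ox] := Cauchy pp pG.
have pA : (p.-group <[x]>)%g by rewrite /pgroup -orderE ox pnat_id.
have actA : ([acts <[x]>, on Q | 'J])%g.
  by rewrite astabsJ (subset_trans _ (normal_norm nQG)) // cycle_subG.
have Hmod := pgroup_fix_mod pA actA.
have F1 : ('Fix_(Q | 'J)(<[x]>) = 'C_Q(<[x]>))%g by rewrite afixJ.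
rewrite F1 oQ in Hmod.
have nt : ('C_Q(<[x]>) != 1)%g.
  apply: contra Hpn => /eqP E1; rewrite E1 cards1 in Hmod.
  by rewrite -eqn_mod_dvd ?expn_gt0 ?q0 // Hmod.
have qC : q %| #|'C_Q(<[x]>)%g|.
  have : #|'C_Q(<[x]>)%g| %| q ^ n by rewrite -oQ cardSg // subsetIl.
  case/dvdn_pfactor => // k _ Ek.
  case: k Ek => [Ek|k ->]; last by rewrite expnS dvdn_mulr.
  by move: nt; rewrite -cardG_gt1 Ek ltnn.
have [y Cy oy] := Cauchy qp qC.
have Qy : y \in Q by move: Cy; rewrite inE => /andP[].
have Gy : y \in G by apply: (subsetP (normal_sub nQG)).
have cxy : commute x y.
  move: Cy => /setIP[_] /centP H; exact: esym (H x (cycle_id x)).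
exists <[x * y]>%G; split.
- by rewrite cycle_subG groupM.
- exact: cycle_abelian.
have cop : coprime #[x]%g #[y]%g by rewrite ox oy prime_coprime // dvdn_prime2.
by rewrite -orderE orderM // ox oy.
Qed.
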